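(* Let $K$ be a compact convex semigroup and let $e \in K$ be a minimal idempotent of $K$. Then $exe=e$ for every $x \in K$.
   Context: A compact convex semigroup is a non-empty compact convex subset $K$ of some locally convex topological vector space, equipped with an associative binary operation $(a,b)\mapsto ab$ on $K$ such that for every fixed $b\in K$ the map $K\ni a\mapsto ab\in K$ is affine and continuous (no continuity or affineness in the second variable is assumed). An element $e\in K$ is idempotent if $ee=e$. On idempotents one defines $e<f$ if and only if $ef=fe=e$; an idempotent $e$ is minimal if there is no idempotent $f\neq e$ with $f<e$. *)

(* Defs.v *)
(* real locally convex (Hausdorff) topological vector spaces,
   presented by a separating family of seminorms. *)
From Stdlib Require Import Reals List.
Open Scope R_scope.

Record LCTVS := {
  vcar :> Type;
  vzero : vcar;
  vadd : vcar -> vcar -> vcar;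
  vopp : vcar -> vcar;
  vscal : R -> vcar -> vcar;
  vaddA : forall x y z, vadd x (vadd y z) = vadd (vadd x y) z;
  vaddC : forall x y, vadd x y = vadd y x;
  vadd0 : forall x, vadd x vzero = x;
  vaddN : forall x, vadd x (vopp x) = vzero;
  vscalA : forall a b x, vscal a (vscal b x) = vscal (a * b) x;
  vscal1 : forall x, vscal 1 x = x;
  vscalDr : forall a x y, vscal a (vadd x y) = vadd (vscal a x) (vscal a y);
  vscalDl : forall a b x, vscal (a + b) x = vadd (vscal a x) (vscal b x);
  sidx : Type;
  snorm : sidx -> vcar -> R;
  snorm_ge0 : forall i x, 0 <= snorm i x;
  snorm_triangle : forall i x y, snorm i (vadd x y) <= snorm i x + snorm i y;
  snorm_hom : forall i a x, snorm i (vscal a x) = Rabs a * snorm i x;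
  snorm_sep : forall x, (forall i, snorm i x = 0) -> x = vzero
}.

Section Topology.
Variable E : LCTVS.

Definition vsub (x y : E) : E := vadd E x (vopp E y).

Definition ball (x : E) (F : list (sidx E)) (eps : R) (y : E) : Prop :=
  forall i, In i F -> snorm E i (vsub y x) < eps.

Definition is_open (U : E -> Prop) : Prop :=
  forall x, U x -> exists (F : list (sidx E)) (eps : R),
    0 < eps /\ forall y, ball x F eps y -> U y.

Definition is_compact (K : E -> Prop) : Prop :=
  forall (J : Type) (U : J -> E -> Prop),
    (forall j, is_open (U j)) ->
    (forall x, K x -> exists j, U j x) ->
    exists l : list J, forall x, K x -> exists j, In j l /\ U j x.

Definition cvx (t : R) (x y : E) : E := vadd E (vscal E t x) (vscal E (1 - t) y).

Definition is_convex (K : E -> Prop) : Prop :=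
  forall x y t, K x -> K y -> 0 <= t <= 1 -> K (cvx t x y).

Definition affine_on (K : E -> Prop) (f : E -> E) : Prop :=
  forall x y t, K x -> K y -> 0 <= t <= 1 -> f (cvx t x y) = cvx t (f x) (f y).

Definition continuous_on (K : E -> Prop) (f : E -> E) : Prop :=
  forall x, K x -> forall W, is_open W -> W (f x) ->
    exists U, is_open U /\ U x /\ forall y, K y -> U y -> W (f y).

Definition compact_convex_semigroup (K : E -> Prop) (mul : E -> E -> E) : Prop :=
  (exists x, K x) /\ is_convex K /\ is_compact K /\
  (forall a b, K a -> K b -> K (mul a b)) /\
  (forall a b c, K a -> K b -> K c -> mul (mul a b) c = mul a (mul b c)) /\
  (forall b, K b -> affine_on K (fun a => mul a b) /\
                    continuous_on K (fun a => mul a b)).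

Definition idempotent (mul : E -> E -> E) (e : E) : Prop := mul e e = e.

Definition idem_lt (mul : E -> E -> E) (e f : E) : Prop :=
  mul e f = e /\ mul f e = e.

Definition minimal_idempotent (K : E -> Prop) (mul : E -> E -> E) (e : E) : Prop :=
  K e /\ idempotent mul e /\
  ~ (exists f, K f /\ idempotent mul f /\ f <> e /\ idem_lt mul f e).

End Topology.

(* Main.v *)
Require Import Defs.
From Stdlib Require Import Reals List Lra Classical ZArith.
Require mathcomp.classical.classical_sets.
Set Bullet Behavior "Strict Subproofs".
Open Scope R_scope.

Section Alg.
Context (E : LCTVS).
Lemma vadd0l (x : E) : vadd E (vzero E) x = x.
Proof. rewrite vaddC; apply vadd0. Qed.
Lemma vaddNl (x : E) : vadd E (vopp E x) x = vzero E.
Proof. rewrite vaddC; apply vaddN. Qed.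
Lemma vadd_cancel (a b c : E) : vadd E a b = vadd E a c -> b = c.
Proof.
  intro H. rewrite <- (vadd0l b), <- (vadd0l c), <- (vaddNl a), <- !vaddA, H. reflexivity.
Qed.
Lemma vscal0 (x : E) : vscal E 0 x = vzero E.
Proof.
  apply (vadd_cancel (vscal E 0 x)). rewrite vadd0. rewrite <- vscalDl. f_equal. ring.
Qed.
Lemma vopp_scal (x : E) : vopp E x = vscal E (-1) x.
Proof.
  apply (vadd_cancel x). rewrite vaddN. rewrite <- (vscal1 E x) at 1.
  rewrite <- vscalDl. replace (1 + -1) with 0 by ring. symmetry; apply vscal0.
Qed.
Lemma snorm_opp i (x : E) : snorm E i (vopp E x) = snorm E i x.
Proof. rewrite vopp_scal, snorm_hom. replace (Rabs (-1)) with 1. ring. rewrite Rabs_left; lra. Qed.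
Lemma vopp_add (x y : E) : vopp E (vadd E x y) = vadd E (vopp E x) (vopp E y).
Proof. rewrite !vopp_scal. apply vscalDr. Qed.
Lemma vopp_opp (x : E) : vopp E (vopp E x) = x.
Proof. rewrite !vopp_scal, vscalA. replace (-1 * -1) with 1 by ring. apply vscal1. Qed.
Lemma vopp_sub (x y : E) : vopp E (vsub E x y) = vsub E y x.
Proof. unfold vsub. rewrite vopp_add, vopp_opp, vaddC. reflexivity. Qed.
Lemma snorm_sub_sym i (x y : E) : snorm E i (vsub E x y) = snorm E i (vsub E y x).
Proof. rewrite <- vopp_sub, snorm_opp. reflexivity. Qed.
Lemma vsub_split (x y z : E) : vsub E x z = vadd E (vsub E x y) (vsub E y z).
Proof.
  unfold vsub. rewrite vaddA. f_equal. rewrite <- vaddA, vaddNl, vadd0. reflexivity.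
Qed.
Lemma snorm_tri i (x y z : E) :
  snorm E i (vsub E x z) <= snorm E i (vsub E x y) + snorm E i (vsub E y z).
Proof. rewrite (vsub_split x y z). apply snorm_triangle. Qed.
Lemma vsub_eq0 (x y : E) : vsub E x y = vzero E -> x = y.
Proof.
  unfold vsub; intro H. rewrite <- (vadd0 E x), <- (vaddNl y), vaddA, H. apply vadd0l.
Qed.
Lemma vsub_addK (x y : E) : vadd E (vsub E x y) y = x.
Proof. unfold vsub. rewrite <- vaddA, vaddNl, vadd0. reflexivity. Qed.
Lemma snorm_le_sub i (x y : E) : snorm E i x <= snorm E i (vsub E x y) + snorm E i y.
Proof. rewrite <- (vsub_addK x y) at 1. apply snorm_triangle. Qed.
Lemma snorm_sub_le i (x y : E) : snorm E i (vsub E x y) <= snorm E i x + snorm E i y.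
Proof. unfold vsub. rewrite <- (snorm_opp i y). apply snorm_triangle. Qed.
Lemma vadd_perm4 (a b c d : E) : vadd E (vadd E a b) (vadd E c d) = vadd E (vadd E a c) (vadd E b d).
Proof.
  rewrite !vaddA. f_equal. rewrite <- !vaddA. f_equal. apply vaddC.
Qed.
Lemma vsub_addadd (a b c d : E) : vsub E (vadd E a b) (vadd E c d) = vadd E (vsub E a c) (vsub E b d).
Proof. unfold vsub. rewrite vopp_add. apply vadd_perm4. Qed.
Lemma vscal_sub t (x y : E) : vscal E t (vsub E x y) = vsub E (vscal E t x) (vscal E t y).
Proof.
  unfold vsub. rewrite vscalDr. f_equal. rewrite !vopp_scal, !vscalA. f_equal. ring.
Qed.
End Alg.
Section Top.
Context (E : LCTVS).

Definition closed (A : E -> Prop) := is_open E (fun x => ~ A x).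

Lemma open_union (Q : (E -> Prop) -> Prop) :
  is_open E (fun u => exists U, is_open E U /\ U u /\ Q U).
Proof.
  intros u [U [HU [Uu QU]]]. destruct (HU u Uu) as [F [eps [He Hb]]].
  exists F, eps. split; [exact He|]. intros y Hy. exists U. split; [exact HU|]. split; [|exact QU].
  apply Hb; exact Hy.
Qed.

Lemma open_inter (U V : E -> Prop) : is_open E U -> is_open E V -> is_open E (fun x => U x /\ V x).
Proof.
  intros HU HV x [Ux Vx]. destruct (HU x Ux) as [F1 [e1 [He1 H1]]].
  destruct (HV x Vx) as [F2 [e2 [He2 H2]]].
  exists (F1 ++ F2), (Rmin e1 e2). split; [apply Rmin_pos; assumption|].
  intros y Hy. split.
  - apply H1. intros i Hi. eapply Rlt_le_trans; [apply Hy; apply in_or_app; left; exact Hi| apply Rmin_l].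
  - apply H2. intros i Hi. eapply Rlt_le_trans; [apply Hy; apply in_or_app; right; exact Hi| apply Rmin_r].
Qed.

Lemma ball1_open x i eps : is_open E (ball E x (i :: nil) eps).
Proof.
  intros y Hy. assert (Hs := Hy i (or_introl eq_refl)).
  exists (i :: nil), (eps - snorm E i (vsub E y x)). split; [lra|].
  intros z Hz j [<-|[]]. assert (Hz' := Hz i (or_introl eq_refl)).
  assert (T := snorm_tri E i z y x). lra.
Qed.

Definition PI := {p : sidx E * R | 0 < snd p}.
Definition minl (l : list PI) : R := fold_right (fun p acc => Rmin (snd (proj1_sig p)) acc) 1 l.
Lemma minl_pos l : 0 < minl l.
Proof.
  induction l as [|p l IH]; simpl; [lra|]. apply Rmin_pos; [exact (proj2_sig p)| exact IH].
Qed.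
Lemma minl_le l p : In p l -> minl l <= snd (proj1_sig p).
Proof.
  induction l as [|q l IH]; simpl; [tauto|]. intros [<-|H].
  - apply Rmin_l.
  - eapply Rle_trans; [apply Rmin_r| apply IH; exact H].
Qed.

Lemma sep_exists (x y : E) : x <> y -> exists i, 0 < snorm E i (vsub E x y).
Proof.
  intro Hxy. apply NNPP. intro Hn. apply Hxy. apply vsub_eq0. apply snorm_sep.
  intro i. destruct (Rle_lt_or_eq_dec 0 _ (snorm_ge0 E i (vsub E x y))) as [Hl|Hl]; [|auto].
  exfalso; apply Hn; exists i; exact Hl.
Qed.

Lemma compact_closed (A : E -> Prop) : is_compact E A -> closed A.
Proof.
  intros HA x Hx.
  set (U := fun (p : PI) (y : E) => snd (proj1_sig p) < snorm E (fst (proj1_sig p)) (vsub E y x)).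
  destruct (HA PI U) as [l Hl].
  - intros [[i r] Hr] y Hy. unfold U in *; simpl in *.
    exists (i :: nil), (snorm E i (vsub E y x) - r). split; [lra|].
    intros z Hz. assert (Hz' := Hz i (or_introl eq_refl)).
    assert (T := snorm_tri E i y z x). rewrite (snorm_sub_sym E i y z) in T. lra.
  - intros y Hy. assert (Hne : y <> x) by (intro; subst; contradiction).
    destruct (sep_exists y x Hne) as [i Hi].
    assert (Hp : 0 < snd (i, snorm E i (vsub E y x) / 2)) by (simpl; lra).
    exists (exist (fun p : sidx E * R => 0 < snd p) (i, snorm E i (vsub E y x) / 2) Hp). unfold U; simpl. lra.
  - exists (map (fun p : PI => fst (proj1_sig p)) l), (minl l). split; [apply minl_pos|].
    intros z Hz Az. destruct (Hl z Az) as [p [Hp Up]]. unfold U in Up.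
    assert (H1 := Hz (fst (proj1_sig p)) (in_map _ _ _ Hp)).
    assert (H2 := minl_le l p Hp). lra.
Qed.

Lemma closed_compact (K A : E -> Prop) :
  is_compact E K -> (forall x, A x -> K x) -> closed A -> is_compact E A.
Proof.
  intros HK HAK HA J U HU Hcov.
  set (V := fun (o : option J) (x : E) => match o with Some j => U j x | None => ~ A x end).
  destruct (HK (option J) V) as [l Hl].
  - intros [j|]; simpl; [apply HU| exact HA].
  - intros x Kx. destruct (classic (A x)) as [Ax|nAx].
    + destruct (Hcov x Ax) as [j Hj]. exists (Some j); exact Hj.
    + exists None; exact nAx.
  - exists (flat_map (fun o => match o with Some j => j :: nil | None => nil end) l).
    intros x Ax. destruct (Hl x (HAK x Ax)) as [[j|] [Hin Hv]]; simpl in Hv.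
    + exists j. split; [|exact Hv]. apply in_flat_map. exists (Some j). split; [exact Hin| left; reflexivity].
    + contradiction.
Qed.

Lemma image_compact (K A : E -> Prop) (f : E -> E) :
  is_compact E A -> (forall x, A x -> K x) -> continuous_on E K f ->
  is_compact E (fun y => exists a, A a /\ y = f a).
Proof.
  intros HA HAK Hf J U HU Hcov.
  set (V := fun (j : J) (x : E) => exists O, is_open E O /\ O x /\ (forall v, K v -> O v -> U j (f v))).
  destruct (HA J V) as [l Hl].
  - intro j. apply (open_union (fun O => forall v, K v -> O v -> U j (f v))).
  - intros x Ax. destruct (Hcov (f x) (ex_intro _ x (conj Ax eq_refl))) as [j Hj].
    destruct (Hf x (HAK x Ax) (U j) (HU j) Hj) as [O [HO [Ox HOf]]].
    exists j, O. auto.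
  - exists l. intros y [a [Aa ->]]. destruct (Hl a Aa) as [j [Hj [O [_ [Oa HO]]]]].
    exists j. split; [exact Hj|]. apply HO; auto.
Qed.

Lemma singleton_closed (a : E) : closed (fun y => y = a).
Proof.
  apply compact_closed. intros J U HU Hcov. destruct (Hcov a eq_refl) as [j Hj].
  exists (j :: nil). intros x ->. exists j. split; [left; reflexivity| exact Hj].
Qed.

Lemma bounded1 (K : E -> Prop) i : is_compact E K -> exists M, 0 <= M /\ forall y, K y -> snorm E i y <= M.
Proof.
  intro HK. destruct (HK nat (fun k y => snorm E i y < INR k)) as [l Hl].
  - intros k y Hy. exists (i :: nil), (INR k - snorm E i y). split; [lra|].
    intros z Hz. assert (Hz' := Hz i (or_introl eq_refl)).
    assert (T := snorm_le_sub E i z y). lra.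
  - intros y _. destruct (archimed (snorm E i y)) as [H1 _].
    exists (Z.to_nat (up (snorm E i y))). rewrite INR_IZR_INZ, Z2Nat.id; [lra|].
    assert (H0 := snorm_ge0 E i y). apply le_IZR. lra.
  - exists (fold_right (fun k acc => Rmax (INR k) acc) 0 l). split.
    + clear Hl. induction l; simpl; [lra|]. eapply Rle_trans; [exact IHl| apply Rmax_r].
    + intros y Ky. destruct (Hl y Ky) as [k [Hk Hlt]]. clear Hl.
      induction l as [|k' l IH]; simpl in *; [tauto|]. destruct Hk as [<-|Hk].
      * eapply Rle_trans; [left; exact Hlt| apply Rmax_l].
      * eapply Rle_trans; [apply IH; exact Hk| apply Rmax_r].
Qed.

Lemma boundedF (K : E -> Prop) (F : list (sidx E)) : is_compact E K ->
  exists M, 0 <= M /\ forall i y, In i F -> K y -> snorm E i y <= M.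
Proof.
  intro HK. induction F as [|i F IH].
  - exists 0. split; [lra|]. intros i y [].
  - destruct IH as [M [HM0 HM]]. destruct (bounded1 K i HK) as [M1 [HM10 HM1]].
    exists (Rmax M1 M). split; [eapply Rle_trans; [exact HM0| apply Rmax_r]|].
    intros j y [<-|Hj] Ky.
    + eapply Rle_trans; [apply HM1; exact Ky| apply Rmax_l].
    + eapply Rle_trans; [apply HM; assumption| apply Rmax_r].
Qed.

End Top.
Section Fix.
Context (E : LCTVS) (T : E -> E) (x0 : E).

Definition pit (k : nat) : E := Nat.iter k T x0.
Fixpoint Ssum (n : nat) : E := match n with O => x0 | S m => vadd E (Ssum m) (pit (S m)) end.
Fixpoint Ssum' (n : nat) : E := match n with O => pit 1 | S m => vadd E (Ssum' m) (pit (S (S m))) end.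
Definition avg (n : nat) : E := vscal E (/ (INR n + 1)) (Ssum n).

Lemma cvx_avg (n : nat) (p Sv : E) :
  cvx E (/ (INR (S n) + 1)) p (vscal E (/ (INR n + 1)) Sv) = vscal E (/ (INR (S n) + 1)) (vadd E Sv p).
Proof.
  unfold cvx. rewrite vscalA, vscalDr, vaddC. f_equal. f_equal. rewrite S_INR.
  assert (H := pos_INR n). field. split; lra.
Qed.

Lemma t_range (n : nat) : 0 <= / (INR (S n) + 1) <= 1.
Proof.
  rewrite S_INR. assert (H := pos_INR n). split.
  - left. apply Rinv_0_lt_compat. lra.
  - rewrite <- Rinv_1. apply Rinv_le_contravar; lra.
Qed.

Lemma Ssum_diff n : vsub E (Ssum' n) (Ssum n) = vsub E (pit (S n)) x0.
Proof.
  induction n as [|n IH]; simpl; [reflexivity|].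
  rewrite vsub_addadd, IH, vaddC. symmetry. apply vsub_split.
Qed.

Lemma avg_props (K : E -> Prop) : K x0 -> is_convex E K -> (forall y, K y -> K (T y)) ->
  affine_on E K T -> forall n, K (avg n) /\ T (avg n) = vscal E (/ (INR n + 1)) (Ssum' n).
Proof.
  intros Kx0 Hc HT Ha.
  assert (Kp : forall k, K (pit k)) by (induction k; simpl; auto).
  induction n as [|n [IH1 IH2]].
  - unfold avg; simpl. replace (/ (0 + 1)) with 1 by field. rewrite !vscal1. split; auto.
  - assert (Ha' : avg (S n) = cvx E (/ (INR (S n) + 1)) (pit (S n)) (avg n)).
    { unfold avg at 2. rewrite cvx_avg. reflexivity. }
    rewrite Ha'. split.
    + apply Hc; auto. apply t_range.
    + rewrite Ha; auto; [|apply t_range]. rewrite IH2. apply cvx_avg.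
Qed.

End Fix.

Lemma fixpt (E : LCTVS) (K : E -> Prop) (T : E -> E) (x0 : E) :
  K x0 -> is_convex E K -> is_compact E K -> (forall y, K y -> K (T y)) ->
  affine_on E K T -> continuous_on E K T -> exists a, K a /\ T a = a.
Proof.
  intros Kx0 Hc HK HT Ha Hct. apply NNPP. intro Hno.
  assert (Hn : forall y, K y -> T y <> y) by (intros y Ky Heq; apply Hno; exists y; auto).
  set (V := fun (p : PI E) (u : E) => exists U, is_open E U /\ U u /\
     (forall v, K v -> U v -> snd (proj1_sig p) < snorm E (fst (proj1_sig p)) (vsub E (T v) v))).
  destruct (HK (PI E) V) as [l Hl].
  - intro p. apply (open_union E (fun U => forall v, K v -> U v -> snd (proj1_sig p) < snorm E (fst (proj1_sig p)) (vsub E (T v) v))).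
  - intros y Ky. destruct (sep_exists E (T y) y (Hn y Ky)) as [i Hi].
    set (d := snorm E i (vsub E (T y) y)) in *.
    assert (Hp : 0 < snd (i, d / 2)) by (simpl; lra).
    exists (exist (fun p : sidx E * R => 0 < snd p) (i, d / 2) Hp).
    destruct (Hct y Ky (ball E (T y) (i :: nil) (d / 4)) (ball1_open E _ _ _)) as [U [HU [Uy HUf]]].
    { intros j [<-|[]]. unfold vsub. rewrite vaddN. replace (vzero E) with (vscal E 0 (vzero E)).
      rewrite snorm_hom, Rabs_R0. lra. apply vscal0. }
    exists (fun u => U u /\ ball E y (i :: nil) (d / 4) u). split; [apply open_inter; [exact HU| apply ball1_open]|].
    split.
    + split; [exact Uy|]. intros j [<-|[]]. unfold vsub. rewrite vaddN. replace (vzero E) with (vscal E 0 (vzero E)).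
      rewrite snorm_hom, Rabs_R0. lra. apply vscal0.
    + intros v Kv [Uv Bv]. simpl. assert (H1 := HUf v Kv Uv i (or_introl eq_refl)).
      assert (H2 := Bv i (or_introl eq_refl)).
      assert (T1 := snorm_tri E i (T y) (T v) y). assert (T2 := snorm_tri E i (T v) v y).
      rewrite (snorm_sub_sym E i (T y) (T v)) in T1. fold d in T1. lra.
  - set (F := map (fun p : PI E => fst (proj1_sig p)) l).
    destruct (boundedF E K F HK) as [M [HM0 HM]].
    set (dl := minl E l). assert (Hdl : 0 < dl) by apply minl_pos.
    set (n := Z.to_nat (up (2 * M / dl))).
    assert (Hnn : 2 * M / dl < INR n + 1).
    { unfold n. destruct (archimed (2 * M / dl)) as [H1 _].
      assert (0 <= 2 * M / dl) by (unfold Rdiv; apply Rmult_le_pos; [lra| left; apply Rinv_0_lt_compat; lra]).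
      rewrite INR_IZR_INZ, Z2Nat.id; [lra|]. apply le_IZR. lra. }
    destruct (avg_props E T x0 K Kx0 Hc HT Ha n) as [Ka HTa].
    destruct (Hl (avg E T x0 n) Ka) as [p [Hp [U [_ [Uu HUv]]]]].
    assert (Hlt := HUv _ Ka Uu). rewrite HTa in Hlt. unfold avg in Hlt.
    rewrite <- vscal_sub, Ssum_diff, snorm_hom in Hlt.
    assert (Hin : In (fst (proj1_sig p)) F) by (unfold F; exact (in_map (fun p : PI E => fst (proj1_sig p)) l p Hp)).
    assert (B := snorm_sub_le E (fst (proj1_sig p)) (pit E T x0 (S n)) x0).
    assert (Kp : forall k, K (pit E T x0 k)) by (induction k; simpl; auto).
    assert (B1 := HM _ _ Hin (Kp (S n))). assert (B2 := HM _ _ Hin Kx0).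
    assert (Hmin := minl_le E l p Hp). fold dl in Hmin.
    assert (Hc0 : 0 < INR n + 1) by (assert (H := pos_INR n); lra).
    rewrite Rabs_right in Hlt; [|left; apply Rinv_0_lt_compat; exact Hc0].
    assert (Hfin : / (INR n + 1) * (2 * M) < dl).
    { apply (Rmult_lt_reg_l (INR n + 1)); [exact Hc0|].
      rewrite <- Rmult_assoc, Rinv_r, Rmult_1_l; [|lra].
      apply (Rmult_lt_compat_r dl) in Hnn; [|exact Hdl].
      unfold Rdiv in Hnn. rewrite Rmult_assoc, Rinv_l, Rmult_1_r in Hnn; lra. }
    assert (Hle : / (INR n + 1) * snorm E (fst (proj1_sig p)) (vsub E (pit E T x0 (S n)) x0) <= / (INR n + 1) * (2 * M)).
    { apply Rmult_le_compat_l; [left; apply Rinv_0_lt_compat; exact Hc0| lra]. }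
    lra.
Qed.
Lemma list_min {X : Type} (Ach : X -> Prop) (le : X -> X -> Prop) :
  (forall a b, Ach a -> Ach b -> le a b \/ le b a) ->
  (forall a b c, le a b -> le b c -> le a c) ->
  forall l s0, In s0 l -> Ach s0 -> exists m, Ach m /\ forall s, In s l -> Ach s -> le m s.
Proof.
  intros Htot Htr l. induction l as [|s l IH]; intros s0 Hin As0; [destruct Hin|].
  destruct (classic (exists s1, In s1 l /\ Ach s1)) as [[s1 [H1 A1]]|Hno].
  - destruct (IH s1 H1 A1) as [m [Am Hm]].
    destruct (classic (Ach s)) as [As|nAs].
    + destruct (Htot m s Am As) as [Hms|Hsm].
      * exists m. split; [exact Am|]. intros s' [<-|Hs'] As'; [exact Hms| apply Hm; auto].
      * exists s. split; [exact As|]. intros s' [<-|Hs'] As'.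
        -- destruct (Htot s s As As); assumption.
        -- apply (Htr _ m); auto.
    + exists m. split; [exact Am|]. intros s' [<-|Hs'] As'; [contradiction| apply Hm; auto].
  - destruct Hin as [<-|Hin]; [|exfalso; apply Hno; exists s0; auto].
    exists s. split; [exact As0|]. intros s' [<-|Hs'] As'.
    + destruct (Htot s s As0 As0); assumption.
    + exfalso; apply Hno; exists s'; auto.
Qed.

Lemma idem_exists (E : LCTVS) (K C : E -> Prop) (mul : E -> E -> E) :
  is_compact E K -> (forall b, K b -> continuous_on E K (fun a => mul a b)) ->
  (forall a b c, K a -> K b -> K c -> mul (mul a b) c = mul a (mul b c)) ->
  (forall x, C x -> K x) -> closed E C -> (exists x, C x) ->
  (forall x y, C x -> C y -> C (mul x y)) -> exists f, C f /\ mul f f = f.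
Proof.
  intros HK Hcont Hassoc HCK HCc HCne HCm.
  set (P := fun A : E -> Prop => (exists x, A x) /\ closed E A /\ (forall x, A x -> C x) /\
                                  (forall x y, A x -> A y -> A (mul x y))).
  assert (PC : P C) by (repeat split; auto).
  assert (Hmin : exists A, P A /\ forall B, P B -> (forall x, B x -> A x) -> forall x, A x -> B x).
  { set (Ty := {A : E -> Prop | P A}).
    set (t0 := exist P C PC : Ty).
    set (R := fun s t : Ty => boolp.asbool (forall x, proj1_sig t x -> proj1_sig s x)).
    destruct (@classical_sets.ZL_preorder Ty t0 R) as [t Ht].
    - intro t. apply boolp.asboolT. auto.
    - intros r s t Hrs Hst. apply boolp.asboolT. apply boolp.asboolW in Hrs, Hst. auto.
    - intros Ach Htot.
      set (I := fun x => C x /\ forall s, Ach s -> proj1_sig s x).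
      assert (PI_ : P I).
      { split; [|split; [|split]].
        - apply NNPP. intro Hno.
          assert (HCc' : is_compact E C) by (apply (closed_compact E K); auto).
          destruct (HCc' Ty (fun s x => Ach s /\ ~ proj1_sig s x)) as [l Hl].
          + intro s. destruct (classic (Ach s)) as [As|nAs].
            * intros x [_ Hx]. destruct (proj1 (proj2 (proj2_sig s)) x Hx) as [F [eps [He Hb]]].
              exists F, eps. split; [exact He|]. intros y Hy. split; [exact As| apply Hb; exact Hy].
            * intros x [As' _]; contradiction.
          + intros x Cx. assert (~ forall s, Ach s -> proj1_sig s x) as Hn.
            { intro H; apply Hno; exists x; split; auto. }
            apply not_all_ex_not in Hn. destruct Hn as [s Hs]. apply imply_to_and in Hs.
            exists s; exact Hs.
          + destruct HCne as [c Cc]. destruct (Hl c Cc) as [j0 [Hj0 [Aj0 _]]].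
            destruct (list_min Ach (fun m s => forall x, proj1_sig m x -> proj1_sig s x)) with (l := l) (s0 := j0)
              as [m [Am Hm]]; auto.
            * intros a b Aa Ab. destruct (Htot a b Aa Ab) as [H|H]; apply boolp.asboolW in H; auto.
            * destruct (proj1 (proj2_sig m)) as [x Hx].
              destruct (Hl x (proj1 (proj2 (proj2 (proj2_sig m))) x Hx)) as [j [Hj [Aj nj]]].
              apply nj. apply (Hm j Hj Aj). exact Hx.
        - intros x Hx. destruct (classic (C x)) as [Cx|nCx].
          + assert (~ forall s, Ach s -> proj1_sig s x) as Hn.
            { intro H; apply Hx; split; auto. }
            apply not_all_ex_not in Hn. destruct Hn as [s Hs]. apply imply_to_and in Hs.
            destruct Hs as [As nsx].
            destruct (proj1 (proj2 (proj2_sig s)) x nsx) as [F [eps [He Hb]]].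
            exists F, eps. split; [exact He|]. intros y Hy [_ Iy]. apply (Hb y Hy). apply Iy; exact As.
          + destruct (HCc x nCx) as [F [eps [He Hb]]].
            exists F, eps. split; [exact He|]. intros y Hy [Cy _]. apply (Hb y Hy Cy).
        - intros x [Cx _]; exact Cx.
        - intros x y [Cx Hx] [Cy Hy]. split; [apply HCm; auto|].
          intros s As. apply (proj2 (proj2 (proj2 (proj2_sig s)))); auto. }
      exists (exist P I PI_). intros s As. apply boolp.asboolT. intros x [_ Hx]. apply Hx; exact As.
    - exists (proj1_sig t). split; [exact (proj2_sig t)|].
      intros B PB HBA. assert (HR : is_true (R t (exist P B PB))) by (apply boolp.asboolT; exact HBA).
      apply Ht in HR. apply boolp.asboolW in HR. exact HR. }
  destruct Hmin as [A [[[a Aa] [HAc [HAC HAm]]] Hmin]].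
  assert (HAK : forall x, A x -> K x) by auto.
  assert (HAa : P (fun y => exists b, A b /\ y = mul b a)).
  { split; [|split; [|split]].
    - exists (mul a a), a; auto.
    - apply compact_closed. apply (image_compact E K); auto.
      apply (closed_compact E K); auto.
    - intros y [b [Ab ->]]. auto.
    - intros x y [b [Ab ->]] [b' [Ab' ->]]. exists (mul (mul b a) b'). split; [auto|].
      symmetry; apply Hassoc; auto. }
  assert (HsubA : forall y, (exists b, A b /\ y = mul b a) -> A y)
    by (intros y [b [Ab ->]]; auto).
  destruct (Hmin _ HAa HsubA a Aa) as [b0 [Ab0 Hb0]].
  assert (HS : P (fun b => A b /\ mul b a = a)).
  { split; [|split; [|split]].
    - exists b0. auto.
    - intros x Hx. destruct (classic (A x)) as [Ax|nAx].
      + assert (Hxa : mul x a <> a) by (intro; apply Hx; auto).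
        destruct (Hcont a (HAK a Aa) x (HAK x Ax) (fun y => ~ y = a) (singleton_closed E a) Hxa)
          as [U [HU [Ux HUf]]].
        destruct (HU x Ux) as [F [eps [He Hb]]]. exists F, eps. split; [exact He|].
        intros y Hy [Ay Hya]. apply (HUf y (HAK y Ay) (Hb y Hy) Hya).
      + destruct (HAc x nAx) as [F [eps [He Hb]]]. exists F, eps. split; [exact He|].
        intros y Hy [Ay _]. apply (Hb y Hy Ay).
    - intros x [Ax _]; auto.
    - intros x y [Ax Hx] [Ay Hy]. split; [auto|]. rewrite Hassoc; auto. rewrite Hy; exact Hx. }
  destruct (Hmin _ HS (fun x H => proj1 H) a Aa) as [_ Haa].
  exists a. auto.
Qed.

Theorem mainTheorem2 (E : LCTVS) (K : E -> Prop) (mul : E -> E -> E) (e : E) :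
  compact_convex_semigroup E K mul ->
  minimal_idempotent E K mul e ->
  forall x, K x -> mul (mul e x) e = e.
Proof.
  intros [Hne [Hconv [Hcomp [Hcl [Hassoc Hright]]]]] [Ke [Hee Hmin]] x Kx.
  unfold idempotent in Hee.
  assert (Hcont : forall b, K b -> continuous_on E K (fun a => mul a b)) by (intros b Kb; apply Hright; auto).
  assert (Hleft : forall w, K w -> mul w e = w -> exists v, K v /\ mul v w = e).
  { intros w Kw Hwe.
    destruct (idem_exists E K (fun y => exists u, K u /\ y = mul u w) mul Hcomp Hcont Hassoc)
      as [f [[u [Ku ->]] Hff]].
    - intros y [u [Ku ->]]; auto.
    - apply compact_closed. apply (image_compact E K); auto.
    - exists (mul w w), w; auto.
    - intros y1 y2 [u [Ku ->]] [u' [Ku' ->]]. exists (mul (mul u w) u'). split; [auto|].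
      symmetry; apply Hassoc; auto.
    - set (f := mul u w) in *. assert (Kf : K f) by (unfold f; auto).
      assert (Hfe : mul f e = f) by (unfold f; rewrite Hassoc, Hwe; auto).
      set (g := mul e f).
      assert (Kg : K g) by (unfold g; auto).
      assert (Hgg : mul g g = g).
      { unfold g. rewrite Hassoc; auto. rewrite <- (Hassoc f e f); auto. rewrite Hfe, Hff. reflexivity. }
      assert (Hge : mul g e = g) by (unfold g; rewrite Hassoc, Hfe; auto).
      assert (Heg : mul e g = g) by (unfold g; rewrite <- Hassoc, Hee; auto).
      assert (Hg : g = e).
      { apply NNPP. intro Hne'. apply Hmin. exists g. repeat split; auto. }
      exists (mul e u). split; [auto|]. unfold g, f in Hg. rewrite Hassoc; auto. }
  set (z := mul (mul e x) e).
  assert (Kz : K z) by (unfold z; auto).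
  assert (Hze : mul z e = z) by (unfold z; rewrite Hassoc, Hee; auto).
  assert (Hez : mul e z = z).
  { unfold z. rewrite <- Hassoc, <- Hassoc, Hee; auto. }
  destruct Hne as [x0 Kx0].
  destruct (fixpt E K (fun u => mul u z) x0 Kx0 Hconv Hcomp) as [a [Ka Haz]].
  - intros y Ky; auto.
  - apply Hright; auto.
  - apply Hright; auto.
  - simpl in Haz. set (w := mul e a).
    assert (Kw : K w) by (unfold w; auto).
    assert (Hae : mul a e = a) by (rewrite <- Haz at 1; rewrite Hassoc, Hze; auto).
    assert (Hwe : mul w e = w) by (unfold w; rewrite Hassoc, Hae; auto).
    assert (Hwz : mul w z = w) by (unfold w; rewrite Hassoc, Haz; auto).
    destruct (Hleft w Kw Hwe) as [v [Kv Hvw]].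
    fold z. rewrite <- Hez, <- Hvw, Hassoc, Hwz; auto.
Qed.
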